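(* Let $k\in\mathbb{N}$ be even and let $n,m$ be odd integers. Then $$2K_{k,1}\left(\tfrac{n}{2},\tfrac{m}{2}\right)=K_{k,2}(n,m)=H_{2k}(n,m)\qquad\text{and}\qquad K_{k,1}(n,m)=H_k(n,m).$$
   Context: For even $k\in\mathbb{N}$ put $k^*=4k$ if $\gcd(k,6)=2$ and $k^*=36k$ if $6\mid k$. For $a\in\{1,2\}$ and $n,m\in\frac12\mathbb{Z}$, $K_{k,a}(n,m)=\sum_{0\le h<ak,\ \gcd(h,ak)=1} e^{\frac{2\pi i}{ak}(-nh+mh')}$, where for each $h$, $h'$ is an integer with $hh'\equiv-1\pmod{k^*}$. For $K\in\mathbb{N}$ and integers $n,m$, the Kloosterman sum is $H_K(n,m)=\sum_{0\le h<K,\ \gcd(h,K)=1} e^{-\frac{2\pi i}{K}(nh-mw)}$, where for each $h$, $w$ is an integer with $hw\equiv-1\pmod K$. *)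

(* Defs.v *)
From Stdlib Require Import Reals ZArith List.
From Coquelicot Require Import Coquelicot.
Open Scope R_scope.

Definition ee (x : R) : C := (cos (2 * PI * x), sin (2 * PI * x)).

(* finite sum  sum_{0 <= h < N} f h  (empty if N <= 0) *)
Definition csum (N : Z) (f : Z -> C) : C :=
  fold_right Cplus (RtoC 0) (map (fun i => f (Z.of_nat i)) (seq 0 (Z.to_nat N))).

Definition kstar (k : nat) : Z :=
  let kz := Z.of_nat k in
  if Z.eqb (Z.gcd kz 6) 2 then (4 * kz)%Z else (36 * kz)%Z.

(* K_{k,a}(n,m), n m in (1/2)Z represented as reals; inv h plays the role of h'. *)
Definition Kka (k a : nat) (n m : R) (inv : Z -> Z) : C :=
  let N := (Z.of_nat a * Z.of_nat k)%Z in
  csum N (fun h =>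
    if Z.eqb (Z.gcd h N) 1
    then ee ((- n * IZR h + m * IZR (inv h)) / IZR N)
    else RtoC 0).

Definition inv_ok (k a : nat) (inv : Z -> Z) : Prop :=
  forall h : Z, (0 <= h < Z.of_nat a * Z.of_nat k)%Z ->
    Z.gcd h (Z.of_nat a * Z.of_nat k) = 1%Z ->
    Z.divide (kstar k) (h * inv h + 1)%Z.

Definition HK (K : nat) (n m : Z) (w : Z -> Z) : C :=
  let N := Z.of_nat K in
  csum N (fun h =>
    if Z.eqb (Z.gcd h N) 1
    then ee (- (IZR n * IZR h - IZR m * IZR (w h)) / IZR N)
    else RtoC 0).

Definition w_ok (K : nat) (w : Z -> Z) : Prop :=
  forall h : Z, (0 <= h < Z.of_nat K)%Z ->
    Z.gcd h (Z.of_nat K) = 1%Z ->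
    Z.divide (Z.of_nat K) (h * w h + 1)%Z.

(* Main.v *)
Require Import Defs.
From Stdlib Require Import Reals ZArith List Lia Znumtheory.
From Coquelicot Require Import Coquelicot.
Open Scope R_scope.

Lemma ee_nat (x : R) (q : nat) : ee (x + INR q) = ee x.
Proof.
  unfold ee.
  replace (2 * PI * (x + INR q)) with (2 * PI * x + 2 * INR q * PI) by ring.
  rewrite cos_period, sin_period. reflexivity.
Qed.

Lemma ee_int (x : R) (q : Z) : ee (x + IZR q) = ee x.
Proof.
  destruct (Z_le_gt_dec 0 q).
  - replace q with (Z.of_nat (Z.to_nat q)) by lia.
    rewrite <- INR_IZR_INZ. apply ee_nat.
  - assert (E: ee ((x + IZR q) + INR (Z.to_nat (-q))) = ee (x+IZR q)) by apply ee_nat.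
    rewrite <- E. f_equal. rewrite INR_IZR_INZ, Z2Nat.id by lia.
    rewrite opp_IZR. ring.
Qed.

Lemma ee_eq (x y : R) (a b N : Z) : (0 < N)%Z -> x = IZR a / IZR N ->
  y = IZR b / IZR N -> Z.divide N (a - b) -> ee x = ee y.
Proof.
  intros HN Hx Hy [q Hq].
  assert (x = y + IZR q) as ->.
  { rewrite Hx, Hy. assert (a = b + q * N)%Z as -> by lia.
    rewrite plus_IZR, mult_IZR. field. apply IZR_neq. lia. }
  apply ee_int.
Qed.
Definition G (s l : nat) (f : Z -> C) : C :=
  fold_right Cplus (RtoC 0) (map (fun i => f (Z.of_nat i)) (seq s l)).

Lemma csum_G N f : csum N f = G 0 (Z.to_nat N) f.
Proof. reflexivity. Qed.

Lemma G_S s l f : G s (S l) f = Cplus (f (Z.of_nat s)) (G (S s) l f).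
Proof. reflexivity. Qed.

Lemma G_split a b s f : G s (a + b) f = Cplus (G s a f) (G (s + a) b f).
Proof.
  revert s. induction a as [|a IH]; intros s.
  - simpl. rewrite Nat.add_0_r. unfold G at 2. simpl. rewrite Cplus_0_l. reflexivity.
  - change (S a + b)%nat with (S (a + b)). rewrite !G_S, IH. rewrite Cplus_assoc.
    replace (S s + a)%nat with (s + S a)%nat by lia. reflexivity.
Qed.

Lemma G_ext s l f g : (forall i, (s <= i < s + l)%nat -> f (Z.of_nat i) = g (Z.of_nat i)) ->
  G s l f = G s l g.
Proof.
  revert s. induction l as [|l IH]; intros s H.
  - reflexivity.
  - rewrite !G_S. rewrite H by lia. rewrite IH. reflexivity.
    intros i Hi. apply H. lia.
Qed.

Lemma G_shift s l f : G s l f = G 0 l (fun z => f (z + Z.of_nat s)%Z).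
Proof.
  revert s f. induction l as [|l IH]; intros s f.
  - reflexivity.
  - rewrite !G_S, IH, (IH 1%nat). simpl Z.of_nat at 2. f_equal.
    apply G_ext. intros i _. f_equal. lia.
Qed.

Lemma csum_ext N f g : (forall h, (0 <= h < N)%Z -> f h = g h) -> csum N f = csum N g.
Proof.
  intros H. rewrite !csum_G. apply G_ext. intros i Hi. apply H. lia.
Qed.

Lemma kstar_div k : Z.divide (4 * Z.of_nat k) (kstar k).
Proof.
  unfold kstar. destruct (Z.gcd (Z.of_nat k) 6 =? 2)%Z.
  - exists 1%Z. ring.
  - exists 9%Z. ring.
Qed.
Lemma inv_diff (N h i w : Z) : Z.divide N (h * i + 1) -> Z.divide N (h * w + 1) ->
  Z.divide N (i - w).
Proof.
  intros [p Hp] [q Hq]. exists (i * q - w * p)%Z.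
  transitivity (i * (h * w + 1) - w * (h * i + 1))%Z; [ring|].
  rewrite Hp, Hq. ring.
Qed.

Lemma KH k a K' n m inv w : (Z.of_nat a * Z.of_nat k = Z.of_nat K')%Z ->
  Z.divide (Z.of_nat K') (kstar k) -> inv_ok k a inv -> w_ok K' w ->
  Kka k a (IZR n) (IZR m) inv = HK K' n m w.
Proof.
  intros HE Hd Hi Hw. unfold Kka, HK. rewrite HE. apply csum_ext.
  intros h Hh. destruct (Z.gcd h (Z.of_nat K') =? 1)%Z eqn:Hg; [|reflexivity].
  apply Z.eqb_eq in Hg.
  apply (ee_eq _ _ (- n * h + m * inv h) (- (n * h - m * w h)) (Z.of_nat K')).
  - lia.
  - rewrite plus_IZR, !mult_IZR, opp_IZR. reflexivity.
  - rewrite opp_IZR, minus_IZR, !mult_IZR. reflexivity.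
  - assert (Z.divide (Z.of_nat K') (inv h - w h)).
    { apply (inv_diff _ h). eapply Z.divide_trans; [apply Hd|]. apply Hi; rewrite HE; auto.
      apply Hw; lia. }
    destruct H as [q Hq]. exists (m * q)%Z.
    transitivity (m * (inv h - w h))%Z; [ring|]. rewrite Hq. ring.
Qed.
Lemma gcdB h K : Z.gcd h (2 * K) = 1%Z -> Z.gcd h K = 1%Z.
Proof.
  intros H. apply Z.divide_1_r_nonneg. apply Z.gcd_nonneg.
  rewrite <- H. apply Z.gcd_greatest. apply Z.gcd_divide_l.
  eapply Z.divide_trans. apply Z.gcd_divide_r. exists 2%Z. ring.
Qed.

Lemma gcdA h K J : K = (2 * J)%Z -> Z.gcd h K = 1%Z -> Z.gcd h (2 * K) = 1%Z.
Proof.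
  intros HK H. apply Zgcd_1_rel_prime. apply Zgcd_1_rel_prime in H.
  apply rel_prime_mult; auto.
  apply rel_prime_sym. apply (rel_prime_div K). apply rel_prime_sym. auto.
  exists J. lia.
Qed.

Lemma gcdC h K : Z.gcd (h + K) K = Z.gcd h K.
Proof.
  rewrite (Z.gcd_comm (h+K)), (Z.gcd_comm h).
  apply Z.gcd_add_diag_r.
Qed.

Lemma gcdD h K J : K = (2 * J)%Z -> (Z.gcd h K = 1 <-> Z.gcd (h + K) (2 * K) = 1)%Z.
Proof.
  intros HK. split; intros H.
  - apply (gcdA _ _ J HK). rewrite gcdC. auto.
  - rewrite <- gcdC. apply gcdB. auto.
Qed.

Lemma gcdE h K J : K = (2 * J)%Z -> (Z.gcd h K = 1 <-> Z.gcd h (2 * K) = 1)%Z.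
Proof.
  intros HK. split; intros H. - apply (gcdA _ _ J HK); auto. - apply gcdB; auto.
Qed.

Lemma odd_of h i q K : (h * i + 1 = q * (4 * K))%Z -> Z.odd h = true /\ Z.odd i = true.
Proof.
  intros H. apply (f_equal Z.odd) in H.
  rewrite Z.odd_add, !Z.odd_mul in H. simpl (Z.odd 4) in H. simpl (Z.odd 1) in H.
  destruct (Z.odd h), (Z.odd i); simpl in H; try rewrite Bool.andb_false_r in H;
  try discriminate; auto.
Qed.

Lemma shift_inv h i1 i2 q p K J : K = (2 * J)%Z ->
  (h * i1 + 1 = q * (4 * K))%Z -> ((h + K) * i2 + 1 = p * (4 * K))%Z ->
  Z.divide (2 * K) (i2 - i1 - K).
Proof.
  intros HK H1 H2.
  destruct (odd_of _ _ _ _ H1) as [Oh Oi].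
  apply Z.odd_spec in Oh, Oi. destruct Oh as [u Hu]. destruct Oi as [v Hv].
  set (s := (2 * q + u + v + 1 + J)%Z).
  assert (E : ((h + K) * (i1 + K) + 1 = s * (2 * K))%Z).
  { transitivity ((h * i1 + 1) + K * (h + i1) + K * K)%Z; [ring|].
    rewrite H1. unfold s. rewrite Hu, Hv. rewrite HK. ring. }
  exists ((i2 - i1 - K) * (2 * p) - i2 * (2 * p - s))%Z.
  transitivity ((i2 - i1 - K) * ((h + K) * i2 + 1)
     - i2 * (((h + K) * i2 + 1) - ((h + K) * (i1 + K) + 1)))%Z; [ring|].
  rewrite H2, E. ring.
Qed.
Lemma part1 k n m inv1 inv2 : Nat.even k = true -> Z.odd n = true -> Z.odd m = true ->
  inv_ok k 1 inv1 -> inv_ok k 2 inv2 ->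
  Cmult (RtoC 2) (Kka k 1 (IZR n / 2) (IZR m / 2) inv1) = Kka k 2 (IZR n) (IZR m) inv2.
Proof.
  intros Hk Hn Hm Hi1 Hi2.
  apply Nat.even_spec in Hk. destruct Hk as [j Hj].
  assert (HK : Z.of_nat k = (2 * Z.of_nat j)%Z) by lia.
  set (K := Z.of_nat k) in *.
  unfold inv_ok in Hi1, Hi2. change (Z.of_nat 1) with 1%Z in Hi1.
  change (Z.of_nat 2) with 2%Z in Hi2. rewrite Z.mul_1_l in Hi1. fold K in Hi1, Hi2.
  unfold Kka. cbv zeta. change (Z.of_nat 1) with 1%Z. change (Z.of_nat 2) with 2%Z.
  rewrite Z.mul_1_l. fold K. rewrite !csum_G.
  replace (Z.to_nat K) with k by lia. replace (Z.to_nat (2 * K)) with (k + k)%nat by lia.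
  rewrite G_split, (G_shift (0 + k)). replace (Z.of_nat (0 + k)) with K by lia.
  assert (HKp : (0 <= K)%Z) by lia.
  match goal with |- Cmult _ (G 0 k ?f1) = Cplus (G 0 k ?f2) (G 0 k ?f3) =>
    assert (A : G 0 k f1 = G 0 k f2); [|assert (B : G 0 k f1 = G 0 k f3)] end.
  - apply G_ext. intros i Hi. set (h := Z.of_nat i).
    assert (Hh : (0 <= h < K)%Z) by lia. clearbody h.
    destruct (Z.eqb_spec (Z.gcd h K) 1) as [E1|E1];
      destruct (Z.eqb_spec (Z.gcd h (2 * K)) 1) as [E2|E2]; try reflexivity;
      try (exfalso; pose proof (gcdE h K _ HK); tauto).
    apply (ee_eq _ _ (- n * h + m * inv1 h) (- n * h + m * inv2 h) (2 * K)).
    + lia.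
    + rewrite plus_IZR, !mult_IZR, opp_IZR. field. apply IZR_neq. lia.
    + rewrite plus_IZR, !mult_IZR, opp_IZR. reflexivity.
    + assert (D : Z.divide (2 * K) (inv1 h - inv2 h)).
      { apply (inv_diff _ h).
        - eapply Z.divide_trans; [|apply Hi1; auto]. eapply Z.divide_trans; [|apply kstar_div].
          exists 2%Z. fold K. ring.
        - eapply Z.divide_trans; [|apply Hi2; auto; lia]. eapply Z.divide_trans; [|apply kstar_div].
          exists 2%Z. fold K. ring. }
      destruct D as [q Hq]. exists (m * q)%Z.
      transitivity (m * (inv1 h - inv2 h))%Z; [ring|]. rewrite Hq. ring.
  - apply G_ext. intros i Hi. set (h := Z.of_nat i). cbv beta.
    assert (Hh : (0 <= h < K)%Z) by lia. clearbody h.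
    destruct (Z.eqb_spec (Z.gcd h K) 1) as [E1|E1];
      destruct (Z.eqb_spec (Z.gcd (h + K) (2 * K)) 1) as [E2|E2]; try reflexivity;
      try (exfalso; pose proof (gcdD h K _ HK); tauto).
    apply (ee_eq _ _ (- n * h + m * inv1 h) (- n * (h + K) + m * inv2 (h + K)%Z) (2 * K)).
    + lia.
    + rewrite plus_IZR, !mult_IZR, opp_IZR. field. apply IZR_neq. lia.
    + repeat (rewrite plus_IZR || rewrite mult_IZR || rewrite opp_IZR). reflexivity.
    + destruct (Hi1 h Hh E1) as [q1 Hq1]. destruct (Hi2 (h + K)%Z ltac:(lia) E2) as [q2 Hq2].
      destruct (kstar_div k) as [c Hc]. fold K in Hc.
      rewrite Hc in Hq1, Hq2. rewrite Z.mul_assoc in Hq1, Hq2.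
      destruct (shift_inv _ _ _ _ _ _ _ HK Hq1 Hq2) as [r Hr].
      apply Z.odd_spec in Hn, Hm. destruct Hn as [u Hu]. destruct Hm as [v Hv].
      exists (u - v - m * r)%Z.
      transitivity (2 * K * (u - v) - m * (inv2 (h + K) - inv1 h - K))%Z.
      * rewrite Hu, Hv. ring.
      * rewrite Hr. ring.
  - rewrite <- A, <- B. destruct (G 0 k _) as [x y]. unfold Cmult, Cplus. simpl.
    f_equal; ring.
Qed.

Theorem theorem2p5 (k : nat) (n m : Z)
  (inv1 inv2 inv3 w1 w2 : Z -> Z) :
  Nat.even k = true -> Z.odd n = true -> Z.odd m = true ->
  inv_ok k 1 inv1 -> inv_ok k 2 inv2 -> inv_ok k 1 inv3 ->
  w_ok (2 * k) w1 -> w_ok k w2 ->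
  Cmult (RtoC 2) (Kka k 1 (IZR n / 2) (IZR m / 2) inv1) = Kka k 2 (IZR n) (IZR m) inv2 /\
  Kka k 2 (IZR n) (IZR m) inv2 = HK (2 * k) n m w1 /\
  Kka k 1 (IZR n) (IZR m) inv3 = HK k n m w2.
Proof.
  intros Hk Hn Hm H1 H2 H3 W1 W2. split; [|split].
  - apply part1; auto.
  - apply KH; auto. lia.
    eapply Z.divide_trans; [|apply kstar_div]. exists 2%Z. lia.
  - apply KH; auto. lia.
    eapply Z.divide_trans; [|apply kstar_div]. exists 4%Z. lia.
Qed.
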